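(* Let $(P,F)$ be a convex Fuchsian polyhedron in $\mathbb{H}^3$ with invariant plane $\Pi$, and let $Z$ be a Fuchsian deformation of $(P,F)$. Decompose $Z=Z_v+Z_h$ into its vertical and horizontal components. Then $Z_v$ is invariant under $F$: for all $f\in F$ and $x\in P$, $Z_v(f x)=df\,(Z_v(x))$.
   Context: A convex Fuchsian polyhedron is a pair $(P,F)$ where $P$ is a convex polyhedral surface in $\mathbb{H}^3$ (boundary of a locally finite intersection of half-spaces) and $F$ is a discrete group of orientation-preserving isometries leaving invariant a totally geodesic plane $\Pi$, acting cocompactly without fixed points on $\Pi$, with $F(P)=P$ and $F$ acting freely on $P$. An infinitesimal isometric deformation of $P$ is a triangulation of the faces of $P$ with no new vertices plus a Killing field of $\mathbb{H}^3$ on each triangle, coinciding on common edges; it gives a vector field $Z$ on $P$. A Fuchsian Killing field is the extension of a Killing field $K$ of $\Pi$ defined by: at $x$ at distance $d$ from $\Pi$, with $p_d$ the orthogonal projection onto $\Pi$ of the equidistant surface at distance $d$ through $x$, its value is $(dp_d)^{-1}(K(p_d(x)))$. A Fuchsian deformation is an infinitesimal isometric deformation $Z$ such that for each $f\in F$ there is a Fuchsian Killing field $\vec f$ with $Z(fy)=df(\vec f(y)+Z(y))$ for all $y\in P$. At $x\in P$ the vertical direction is the tangent direction at $x$ of the geodesic through $x$ orthogonal to $\Pi$; horizontal directions are those orthogonal to it; $Z_v$ and $Z_h$ are the corresponding orthogonal components of $Z$. *)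

(* Defs.v *)
(* Model: hyperboloid model of H^3 in Minkowski space R^{3,1},
   vectors are column vectors 'cV[R]_4 (coordinate 3 is the time coordinate). *)
From HB Require Import structures.
From mathcomp Require Import all_boot all_order all_algebra.
From mathcomp Require Import all_classical all_reals.
Set Implicit Arguments.
Unset Strict Implicit.
Unset Printing Implicit Defensive.
Import Order.TTheory GRing.Theory Num.Theory.
Local Open Scope ring_scope.
Local Open Scope classical_set_scope.

Section Hyperbolic.
Variable R : realType.

Definition vec := 'cV[R]_4.
Definition mat := 'M[R]_4.

Definition tc : 'I_4 := @Ordinal 4 3 isT.

Definition Jmink : mat := diag_mx (\row_(i < 4) (if i == tc then -1 else 1 : R)).
Definition mink (u v : vec) : R := (u^T *m Jmink *m v) 0 0.

Definition H3 : set vec := [set x | mink x x = -1 /\ 0 < x tc 0].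

(* squared Euclidean distance in R^4 (defines the usual topology on H^3) *)
Definition d2 (x y : vec) : R := \sum_(i < 4) (x i 0 - y i 0) ^+ 2.

(* Orientation-preserving isometries of H^3: elements of SO^+(3,1);
   the differential df of such an isometry at any point is v |-> A v. *)
Definition isom_plus (A : mat) : Prop :=
  [/\ A^T *m Jmink *m A = Jmink, 0 < A tc tc & \det A = 1].

Definition act (A : mat) (S : set vec) : set vec := (fun x => A *m x) @` S.

(* Killing fields of H^3 : x |-> X x with X in so(3,1). *)
Definition skew (X : mat) : Prop := X^T *m Jmink + Jmink *m X = 0.

(* totally geodesic plane with unit spacelike normal n *)
Definition Pi (n : vec) : set vec := [set x | H3 x /\ mink x n = 0].

(* Heine-Borel: compact subsets of H^3 (in R^4) = closed and bounded ones *)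
Definition compactH (K : set vec) : Prop :=
  K `<=` H3 /\
  (exists B : R, forall x, K x -> forall i, `|x i 0| <= B) /\
  (forall x, H3 x -> (forall r, 0 < r -> exists y, K y /\ d2 x y < r) -> K x).

Definition fuchsian_group (n : vec) (F : set mat) : Prop :=
  F 1%:M /\
  (forall g h, F g -> F h -> F (g *m h)) /\
  (forall g, F g -> F (invmx g)) /\
  (forall g, F g -> isom_plus g) /\
  (forall g, F g -> act g (Pi n) = Pi n) /\
  (* discreteness *)
  (exists eps : R, 0 < eps /\ forall g, F g -> g <> 1%:M ->
      exists i j, eps <= `|g i j - (1%:M : mat) i j|) /\
  (* cocompact action on Pi n *)
  (exists K, K `<=` Pi n /\ compactH K /\
      forall x, Pi n x -> exists g y, F g /\ K y /\ x = g *m y) /\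
  (forall g x, F g -> Pi n x -> g *m x = x -> g = 1%:M).

Definition halfspace (m : vec) : set vec := [set x | H3 x /\ mink x m <= 0].
Definition hplane (m : vec) : set vec := [set x | H3 x /\ mink x m = 0].

Definition bdry (C : set vec) : set vec :=
  [set x | C x /\ forall r, 0 < r -> exists y, H3 y /\ ~ C y /\ d2 x y < r].

(* P is the boundary of a locally finite intersection of half-spaces;
   the half-spaces are given by a set M of (spacelike) outer normals. *)
Definition convex_polyhedral_surface (P : set vec) : Prop :=
  exists M : set vec,
    (forall m, M m -> 0 < mink m m) /\
    (forall x, H3 x -> exists r, 0 < r /\
        finite_set [set m | M m /\ exists y, hplane m y /\ d2 x y < r]) /\
    P = bdry (H3 `&` \bigcap_(m in M) halfspace m).

(* geodesic convex hull in H^3 of a finite list of points *)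
Definition hull (s : seq vec) : set vec :=
  [set y | H3 y /\ exists w : 'I_(size s) -> R,
      (forall k, 0 <= w k) /\ y = \sum_(k < size s) w k *: s`_k].

Definition vertex (P : set vec) (x : vec) : Prop :=
  P x /\ ~ (exists a b, [/\ P a, P b, a <> b,
             hull [:: a; b] `<=` P & hull [:: a; b] x /\ x <> a /\ x <> b]).

(* Triangulation of the faces of P with no new vertices: a locally finite
   family of non-degenerate geodesic triangles, each contained in P (hence in
   a face), with vertices among the vertices of P, covering P, any two of
   which meet exactly along the hull of their common vertices. *)
Definition triangulation (P : set vec) (T : set (seq vec)) : Prop :=
  [/\ (forall t, T t -> [/\ size t = 3%N,
          (forall v, v \in t -> vertex P v),
          (forall a b c : R, a *: t`_0 + b *: t`_1 + c *: t`_2 = 0 ->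
              [/\ a = 0, b = 0 & c = 0]) &
          hull t `<=` P]),
      P = [set y | exists t, T t /\ hull t y],
      (forall t t', T t -> T t' ->
          hull t `&` hull t' = hull [seq v <- t | v \in t']) &
      (forall x, P x -> exists r, 0 < r /\
          finite_set [set t | T t /\ exists y, hull t y /\ d2 x y < r])].

Definition inf_isom_deformation (P : set vec) (Z : vec -> vec) : Prop :=
  exists T, triangulation P T /\
    forall t, T t -> exists X, skew X /\ forall y, hull t y -> Z y = X *m y.

(* Killing fields of Pi n: restrictions to Pi n of x |-> X x, X in so(3,1)
   with X n = 0 (i.e. tangent to Pi n). *)
Definition killing_Pi (n : vec) (X : mat) : Prop := skew X /\ X *m n = 0.

(* For x at signed distance d from Pi n,
   sinh d = mink x n, cosh d = sqrt (1 + (mink x n)^2); the projection of the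
   equidistant surface {y | mink y n = sinh d} onto Pi n is
   p_d y = (y - sinh d * n) / cosh d, whose differential on the tangent space
   of the equidistant surface is v |-> v / cosh d.  Hence
   (dp_d)^{-1} (K (p_d x)) = cosh d * K (p_d x). *)
Definition coshd (n x : vec) : R := Num.sqrt (1 + mink x n ^+ 2).
Definition proj_d (n x : vec) : vec := (coshd n x)^-1 *: (x - mink x n *: n).
Definition fuchsian_killing (n : vec) (X : mat) (x : vec) : vec :=
  coshd n x *: (X *m proj_d n x).

Definition fuchsian_deformation (n : vec) (F : set mat) (P : set vec)
    (Z : vec -> vec) : Prop :=
  inf_isom_deformation P Z /\
  forall f, F f -> exists X, killing_Pi n X /\
    forall y, P y -> Z (f *m y) = f *m (fuchsian_killing n X y + Z y).

(* vertical direction at x: tangent at x of the geodesic through x orthogonal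
   to Pi n, namely the orthogonal projection of n onto T_x H^3 *)
Definition vdir (n x : vec) : vec := n + mink n x *: x.

Definition Zvert (n : vec) (Z : vec -> vec) (x : vec) : vec :=
  (mink (Z x) (vdir n x) / mink (vdir n x) (vdir n x)) *: vdir n x.
Definition Zhor (n : vec) (Z : vec -> vec) (x : vec) : vec := Z x - Zvert n Z x.

Definition fuchsian_polyhedron (n : vec) (F : set mat) (P : set vec) : Prop :=
  [/\ mink n n = 1,
      fuchsian_group n F,
      convex_polyhedral_surface P,
      (forall f, F f -> act f P = P) &
      (forall f x, F f -> P x -> f *m x = x -> f = 1%:M)].

End Hyperbolic.

(* Main.v *)
Require Import Defs.
From HB Require Import structures.
From mathcomp Require Import all_boot all_order all_algebra.
From mathcomp Require Import all_classical all_reals.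
From mathcomp Require Import ring lra.
Import Order.TTheory GRing.Theory Num.Theory.
Local Open Scope ring_scope.
Local Open Scope classical_set_scope.
Section S.
Variable R : realType.
Implicit Types u v w : 'cV[R]_4.
Definition i0 : 'I_4 := @Ordinal 4 0 isT.
Definition i1 : 'I_4 := @Ordinal 4 1 isT.
Definition i2 : 'I_4 := @Ordinal 4 2 isT.
Lemma minkE u v : mink u v = u i0 0 * v i0 0 + u i1 0 * v i1 0 + u i2 0 * v i2 0 - u tc 0 * v tc 0.
Proof.
rewrite /mink /Jmink mul_mx_diag mxE !big_ord_recr big_ord0 /= !mxE /=.
have E0 : widen_ord (leqnSn 3) (widen_ord (leqnSn 2) (widen_ord (leqnSn 1) ord_max)) = i0 by apply/val_inj.
have E1 : widen_ord (leqnSn 3) (widen_ord (leqnSn 2) ord_max) = i1 by apply/val_inj.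
have E2 : widen_ord (leqnSn 3) ord_max = i2 by apply/val_inj.
have E3 : (ord_max : 'I_4) = tc by apply/val_inj.
rewrite E0 E1 E2 E3. ring.
Qed.
Lemma minkC u v : mink u v = mink v u.
Proof. rewrite !minkE; ring. Qed.
Lemma minkDl u v w : mink (u + v) w = mink u w + mink v w.
Proof. rewrite !minkE !mxE; ring. Qed.
Lemma minkDr u v w : mink w (u + v) = mink w u + mink w v.
Proof. rewrite !minkE !mxE; ring. Qed.
Lemma minkZl a u v : mink (a *: u) v = a * mink u v.
Proof. rewrite !minkE !mxE; ring. Qed.
Lemma minkZr a u v : mink v (a *: u) = a * mink v u.
Proof. rewrite !minkE !mxE; ring. Qed.
Lemma minkNl u v : mink (- u) v = - mink u v.
Proof. rewrite !minkE !mxE; ring. Qed.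
Lemma minkNr u v : mink v (- u) = - mink v u.
Proof. rewrite !minkE !mxE; ring. Qed.
Lemma minkBl u v w : mink (u - v) w = mink u w - mink v w.
Proof. by rewrite minkDl minkNl. Qed.
Lemma minkBr u v w : mink w (u - v) = mink w u - mink w v.
Proof. by rewrite minkDr minkNr. Qed.
Lemma mink0r u : mink u 0 = 0.
Proof. rewrite !minkE !mxE; ring. Qed.

Lemma mink_isom (A : 'M[R]_4) u v : A^T *m (Jmink R) *m A = (Jmink R) ->
  mink (A *m u) (A *m v) = mink u v.
Proof.
move=> H; rewrite /mink trmx_mul.
have -> : u^T *m A^T *m (Jmink R) *m (A *m v) = u^T *m (A^T *m (Jmink R) *m A) *m v
  by rewrite !mulmxA.
by rewrite H.
Qed.

Lemma mink_skew (X : 'M[R]_4) u v : Defs.skew X -> mink (X *m u) v = - mink u (X *m v).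
Proof.
move=> H; apply/eqP; rewrite -subr_eq0 opprK /mink.
have E : forall A B : 'M[R]_1, A 0 0 + B 0 0 = (A + B) 0 0 by move=> A B; rewrite [RHS]mxE.
rewrite E.
have -> : (X *m u)^T *m (Jmink R) *m v + u^T *m (Jmink R) *m (X *m v)
   = u^T *m (X^T *m (Jmink R) + (Jmink R) *m X) *m v.
  by rewrite mulmxDr mulmxDl !mulmxA trmx_mul.
by rewrite H mulmx0 mul0mx mxE.
Qed.

Lemma JJ : (Jmink R) *m (Jmink R) = 1%:M :> 'M[R]_4.
Proof.
apply/matrixP => i j; rewrite /Jmink mul_mx_diag !mxE.
have [->|nij] := eqVneq i j.
  by rewrite mulr1n; case: (j == tc); rewrite ?mulrNN mulr1.
by rewrite mulr0n mul0r.
Qed.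

Lemma JT : (Jmink R)^T = (Jmink R) :> 'M[R]_4.
Proof. by rewrite /Jmink tr_diag_mx. Qed.

Lemma mink_nondeg w : (forall u, mink u w = 0) -> w = 0.
Proof.
move=> H.
have h0 := H (delta_mx i0 0); have h1 := H (delta_mx i1 0).
have h2 := H (delta_mx i2 0); have h3 := H (delta_mx tc 0).
rewrite minkE !mxE /= in h0; rewrite minkE !mxE /= in h1; rewrite minkE !mxE /= in h2; rewrite minkE !mxE /= in h3.
apply/matrixP => i j; rewrite (ord1 j) mxE.
case: i => [[|[|[|[|k]]]] Hi] //.
- have -> : Ordinal Hi = i0 by apply/val_inj. lra.
- have -> : Ordinal Hi = i1 by apply/val_inj. lra.
- have -> : Ordinal Hi = i2 by apply/val_inj. lra.
- have -> : Ordinal Hi = tc by apply/val_inj. lra.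
Qed.

Lemma fn_scalar (n : 'cV[R]_4) (f : 'M[R]_4) : mink n n = 1 ->
  f^T *m Jmink R *m f = Jmink R ->
  (forall y, Pi n y -> Pi n (f *m y)) ->
  exists c, c * c = 1 /\ f *m n = c *: n.
Proof.
move=> Hnn Hf HPi.
set J := Jmink R.
set m := J *m f^T *m J *m n.
have Hinv : f *m (J *m f^T *m J) = 1%:M.
  by apply: mulmx1C; rewrite -!mulmxA [f^T *m (J *m f)]mulmxA Hf JJ.
have Hfm : f *m m = n.
  by move: Hinv; rewrite /m !mulmxA => ->; rewrite mul1mx.
have Hmm : mink m m = 1 by rewrite -(mink_isom _ _ _ Hf) Hfm.
have Hmy : forall y, mink (f *m y) n = mink y m.
  by move=> y; rewrite /mink /m trmx_mul !mulmxA /J -[y^T *m Jmink R *m Jmink R]mulmxA JJ mulmx1.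
have HA : forall y, mink y y = -1 -> mink y n = 0 -> mink y m = 0.
  move=> y Hyy Hyn.
  have [yp|yn] := boolP (0 < y tc 0).
    have Py : Pi n y by split; [split|].
    by rewrite -Hmy; case: (HPi y Py).
  have yn' : y tc 0 < 0.
    move: yn; rewrite -leNgt => yn; rewrite minkE in Hyy; nra.
  have Py : Pi n (- y).
    split; [split|].
    - by rewrite minkNl minkNr opprK.
    - by rewrite mxE oppr_gt0.
    - by rewrite minkNl Hyn oppr0.
  by apply/eqP; rewrite -oppr_eq0 -minkNl -Hmy; case: (HPi _ Py) => _ ->.
set e : 'cV[R]_4 := delta_mx tc 0.
set t := n tc 0.
have Hee : mink e e = -1 by rewrite minkE !mxE /=; ring.
have Hen : mink e n = - t by rewrite minkE !mxE /=; rewrite /t; ring.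
set u0 := e + t *: n.
have Hu0 : mink u0 u0 = -1 - t * t.
  rewrite /u0 minkDl !minkDr !minkZl !minkZr Hee Hen [mink n e]minkC Hen Hnn; ring.
have Hu0n : mink u0 n = 0.
  rewrite /u0 minkDl minkZl Hen Hnn; ring.
set a := Num.sqrt (1 + t * t).
have tt0 : 0 <= t * t by rewrite -expr2 sqr_ge0.
have a2 : a * a = 1 + t * t.
  by rewrite /a -expr2 sqr_sqrtr // addr_ge0.
have a0 : a != 0.
  apply/negP => /eqP a0; move: a2; rewrite a0 mul0r => H; lra.
set y0 := a^-1 *: u0.
have Hy0y0 : mink y0 y0 = -1.
  rewrite /y0 minkZl minkZr Hu0 (_ : -1 - t * t = - (a * a)); last by rewrite a2 opprD.
  by field.
have Hy0n : mink y0 n = 0 by rewrite /y0 minkZl Hu0n mulr0.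
have Hy0m : mink y0 m = 0 by apply: HA.
clearbody y0.
have HB : forall v, mink v n = 0 -> mink v y0 = 0 -> mink v m = 0.
  move=> v Hvn Hvy.
  set q := mink v v.
  set k := 1 + q * q.
  have qq0 : 0 <= q * q by rewrite -expr2 sqr_ge0.
  have k0 : 0 < k by rewrite /k; lra.
  have kk : 0 <= k * k + q by rewrite /k; nra.
  set w := k^-1 *: v.
  have Hwd : w = k^-1 *: v by [].
  have kn0 : k != 0 by exact: lt0r_neq0.
  have Hww : mink w w = q / (k * k) by rewrite Hwd minkZl minkZr -/q; field.
  have H1 : 0 <= 1 + q / (k * k).
    have -> : 1 + q / (k * k) = (k * k + q) / (k * k) by field.
    by apply: divr_ge0 => //; nra.
  set al := Num.sqrt (1 + q / (k * k)).
  clearbody w.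
  have al2 : al * al = 1 + q / (k * k) by rewrite /al -expr2 sqr_sqrtr.
  have Hwy0 : mink w y0 = 0 by rewrite Hwd minkZl Hvy mulr0.
  have Hy : mink (al *: y0 + w) (al *: y0 + w) = -1.
    rewrite !minkDl !minkDr !minkZl !minkZr Hy0y0 Hww [mink y0 w]minkC Hwy0.
    have -> : al * (al * -1) + al * 0 + (al * 0 + q / (k * k)) = - (al * al) + q / (k * k) by ring.
    rewrite al2; ring.
  have Hyn : mink (al *: y0 + w) n = 0.
    by rewrite minkDl minkZl Hy0n Hwd minkZl Hvn; ring.
  have := HA _ Hy Hyn.
  rewrite minkDl minkZl Hy0m Hwd minkZl mulr0 add0r => /eqP.
  by rewrite mulf_eq0 invr_eq0 (negbTE kn0) /= => /eqP.
have HC : forall v, mink v n = 0 -> mink v m = 0.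
  move=> v Hvn.
  have := HB (v + mink v y0 *: y0).
  rewrite !minkDl !minkZl Hvn Hy0n Hy0y0 Hy0m.
  rewrite !mulr0 add0r addr0 mulrN1 subrr; apply; done.
have Hw : m - mink n m *: n = 0.
  apply: mink_nondeg => u.
  have := HC (u - mink u n *: n).
  rewrite minkBl minkZl Hnn mulr1 subrr => /(_ erefl).
  rewrite minkBl minkZl minkBr minkZr [mink u n]minkC => H.
  rewrite -H; ring.
set c := mink n m.
have Hmc : m = c *: n by apply/eqP; rewrite -subr_eq0 Hw.
have c2 : c * c = 1 by move: Hmm; rewrite Hmc minkZl minkZr Hnn mulr1.
have H : c *: (f *m n) = n by rewrite scalemxAr -Hmc.
exists c; split => //.
by rewrite -[f *m n]scale1r -c2 -scalerA H.
Qed.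
End S.

Theorem proposition3 (R : realType) (n : 'cV[R]_4) (F : set 'M[R]_4)
    (P : set 'cV[R]_4) (Z : 'cV[R]_4 -> 'cV[R]_4) :
  fuchsian_polyhedron n F P ->
  fuchsian_deformation n F P Z ->
  forall f x, F f -> P x -> Zvert n Z (f *m x) = f *m Zvert n Z x.
Proof.
move=> [Hnn HF _ _ _] [_ HZ] f x Ff Px.
have [_ [_ [_ [Hiso [HPi _]]]]] := HF.
have [Hf _ _] := Hiso f Ff.
have HPf : forall y, Pi n y -> Pi n (f *m y) by move=> y Hy; rewrite -(HPi f Ff); exists y.
have [c [c2 Hfn]] := @fn_scalar R n f Hnn Hf HPf.
have [X [[sk Xn] HZf]] := HZ f Ff.
have Hn' : f *m (c *: n) = n by rewrite -scalemxAr Hfn scalerA c2 scale1r.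
have Hnf : mink n (f *m x) = c * mink n x.
  have := mink_isom R f (c *: n) x Hf; rewrite Hn' minkZl; exact.
have Hv : vdir n (f *m x) = c *: (f *m vdir n x).
  rewrite /vdir Hnf mulmxDr -scalemxAr Hfn scalerDr !scalerA c2 scale1r; congr (_ + _).
have Hk : mink (fuchsian_killing n X x) (vdir n x) = 0.
  set s := mink x n.
  set ch := coshd n x.
  set p := proj_d n x.
  have ch0 : 0 < ch.
    rewrite /ch /coshd sqrtr_gt0 -/s.
    have : 0 <= s ^+ 2 by exact: sqr_ge0.
    lra.
  have Hx : x = ch *: p + s *: n.
    by rewrite /p /proj_d -/ch -/s scalerA mulfV ?lt0r_neq0 // scale1r subrK.
  have HXn : mink (X *m p) n = 0 by rewrite mink_skew // Xn mink0r oppr0.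
  have HXp : mink (X *m p) p = 0.
    have H := mink_skew R X p p sk; rewrite [mink p _]minkC in H; lra.
  rewrite /fuchsian_killing -/ch -/p /vdir.
  clearbody p ch s.
  rewrite Hx !minkZl !minkDr !minkZr !minkDr !minkZr HXn HXp; ring.
rewrite /Zvert (_ : vdir n (f *m x) = c *: (f *m vdir n x)) // (HZf x Px) !minkZl !minkZr !mink_isom // minkDl Hk add0r.
rewrite -scalemxAr scalerA mulrA c2 mul1r; congr (_ *: _).
by rewrite mulrC !mulrA c2 mul1r.
Qed.
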